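(* Let $V$ be an $n$-dimensional complex vector space and $P\subset V\oplus V$ a linear relation with $\dim P=n$. Then: (a) $\lambda^m(P)\neq0$ if and only if $\dim\mathrm{Indef}\,P\le m\le\dim\mathrm{Im}\,P$. (b) If $m=\dim\mathrm{Indef}\,P$, then $\mathrm{rk}\,\lambda^m(P)=1$, and $\lambda^m(P)=\lambda^m(Q)$ (up to a nonzero factor) for any linear relation $Q$ with $\dim Q=n$, $\mathrm{Indef}\,Q=\mathrm{Indef}\,P$, $\mathrm{Dom}\,Q=\mathrm{Dom}\,P$; in particular one may take $Q=\mathrm{Dom}\,P\oplus\mathrm{Indef}\,P$. (c) If $m=\dim\mathrm{Im}\,P$, then $\mathrm{rk}\,\lambda^m(P)=1$, and $\lambda^m(P)=\lambda^m(R)$ (up to a nonzero factor) for any linear relation $R$ with $\dim R=n$, $\mathrm{Im}\,R=\mathrm{Im}\,P$, $\mathrm{Ker}\,R=\mathrm{Ker}\,P$; in particular one may take $R=\mathrm{Ker}\,P\oplus\mathrm{Im}\,P$.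
   Context: A linear relation $P:V\rightrightarrows V$ is a linear subspace $P\subset V\oplus V$. $\mathrm{Ker}\,P=\{v: v\oplus0\in P\}$, $\mathrm{Dom}\,P$ is the projection of $P$ onto the first summand, $\mathrm{Im}\,P$ the projection onto the second summand, $\mathrm{Indef}\,P=\{w:0\oplus w\in P\}$. If $\dim P=n$, there exist bases $f_1,\dots,f_a,g_1,\dots,g_b,h_1,\dots,h_c$ and $F_1,\dots,F_a,G_1,\dots,G_b,H_1,\dots,H_c$ of $V$ such that $P$ is spanned by the vectors $0\oplus F_i$, $g_j\oplus G_j$, $h_k\oplus0$. The operator $\lambda(P):\Lambda V\to\Lambda V$ sends $f_1\wedge\dots\wedge f_a\wedge g_{i_1}\wedge\dots\wedge g_{i_s}$ (for $i_1<\dots<i_s$) to $F_1\wedge\dots\wedge F_a\wedge G_{i_1}\wedge\dots\wedge G_{i_s}$ and annihilates all other wedge monomials in the basis $f,g,h$; it depends on the choice of bases only up to a nonzero scalar factor. $\lambda^m(P)$ is the restriction of $\lambda(P)$ to $\Lambda^mV\to\Lambda^mV$. Equalities between such operators are understood up to a nonzero scalar factor. *)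

(* Defs.v *)
From HB Require Import structures.
From mathcomp Require Import all_boot all_order all_algebra.
Set Implicit Arguments. Unset Strict Implicit. Unset Printing Implicit Defensive.
Import GRing.Theory.
Local Open Scope ring_scope.

(* V = 'rV[F]_n (row vectors); V (+) V = 'rV[F]_(n + n).
   A linear relation P is represented by a matrix whose ROW SPACE is P. *)

Section LinRel.
Variable F : fieldType.
Variable n : nat.

Definition Dom k (P : 'M[F]_(k, n + n)) : 'M[F]_(k, n) := lsubmx P.
Definition Im k (P : 'M[F]_(k, n + n)) : 'M[F]_(k, n) := rsubmx P.
(* Ker P = { v | v (+) 0 \in P } : first component of P /\ (V (+) 0) *)
Definition Ker k (P : 'M[F]_(k, n + n)) : 'M[F]_(n + n, n) :=
  lsubmx (P :&: row_mx (1%:M : 'M[F]_n) (0 : 'M[F]_n))%MS.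
(* Indef P = { w | 0 (+) w \in P } : second component of P /\ (0 (+) V) *)
Definition Indef k (P : 'M[F]_(k, n + n)) : 'M[F]_(n + n, n) :=
  rsubmx (P :&: row_mx (0 : 'M[F]_n) (1%:M : 'M[F]_n))%MS.

Definition DomIndef k (P : 'M[F]_(k, n + n)) :=
  col_mx (row_mx (Dom P) 0) (row_mx 0 (Indef P)).
Definition KerIm k (P : 'M[F]_(k, n + n)) :=
  col_mx (row_mx (Ker P) 0) (row_mx 0 (Im P)).

(* The rows of B are f_1..f_a, g_1..g_b, h_1..h_c and the rows
   of B' are F_1..F_a, G_1..G_b, H_1..H_c (c = n - a - b).  The generators of P
   are 0(+)F_i, g_j(+)G_j, h_l(+)0, i.e. row i of the matrix below. *)
Definition adapted_gen (a b : nat) (B B' : 'M[F]_n) : 'M[F]_(n, n + n) :=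
  row_mx (diag_mx (\row_(i < n) ((a <= i)%N)%:R) *m B)
         (diag_mx (\row_(i < n) ((i < a + b)%N)%:R) *m B').

Definition adapted k (P : 'M[F]_(k, n + n)) (a b : nat) (B B' : 'M[F]_n) :=
  [&& (a + b <= n)%N, B \in unitmx, B' \in unitmx &
      (adapted_gen a b B B' == P)%MS].

(* Basis of Lambda^m V: e_{s 0} /\ ... /\ e_{s (m-1)} for strictly increasing s *)
Definition incr m (s : {ffun 'I_m -> 'I_n}) :=
  [forall i : 'I_m, forall j : 'I_m, (i < j)%N ==> (s i < s j)%N].

Definition wb m := {s : {ffun 'I_m -> 'I_n} | incr s}.

(* m-th compound matrix: coordinate at U of the wedge of the rows T of A *)
Definition compound m (A : 'M[F]_n) (T U : wb m) : F :=
  \det (\matrix_(i < m, j < m) A (val T i) (val U j)).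

(* the monomial indexed by T (in the basis f,g,h) is of the form
   f_1 /\ .. /\ f_a /\ g_{i1} /\ .. /\ g_{is} *)
Definition selected (a b : nat) m (T : wb m) :=
  [forall i : 'I_n, (i < a)%N ==> [exists j, val T j == i]] &&
  [forall j : 'I_m, (val T j < a + b)%N].

(* Coefficients of lambda^m(P) in the standard basis of Lambda^m V
   (acting on row vectors):  comp(B^-1) * diag(selected) * comp(B'). *)
Definition lamf (a b : nat) (B B' : 'M[F]_n) m (S U : wb m) : F :=
  \sum_(T : wb m) compound (invmx B) S T *
                  (if selected a b T then compound B' T U else 0).

Definition lam (a b : nat) (B B' : 'M[F]_n) m : 'M[F]_#|{: wb m}| :=
  \matrix_(i, j) lamf a b B B' (enum_val i) (enum_val j).

Definition lam_nonzero_iff m k (P : 'M[F]_(k, n + n)) (cond : bool) :=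
  forall a b B B', adapted P a b B B' -> (lam a b B B' m != 0) = cond.

Definition lam_rank1 m k (P : 'M[F]_(k, n + n)) :=
  forall a b B B', adapted P a b B B' -> \rank (lam a b B B' m) = 1%N.

Definition lam_prop m k (P : 'M[F]_(k, n + n)) k' (Q : 'M[F]_(k', n + n)) :=
  forall a b B B' a' b' C C', adapted P a b B B' -> adapted Q a' b' C C' ->
    exists2 c : F, c != 0 & lam a b B B' m = c *: lam a' b' C C' m.

End LinRel.

(* Main.v *)
Require Import Defs.
From HB Require Import structures.
From mathcomp Require Import all_boot all_order all_algebra fingroup perm.
Import GRing.Theory.
Local Open Scope ring_scope.
Set Implicit Arguments. Unset Strict Implicit. Unset Printing Implicit Defensive.

Section Comb.
Variables n m : nat.

Lemma incr_lt (s : {ffun 'I_m -> 'I_n}) : incr s ->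
  forall i j : 'I_m, (s i < s j)%N = (i < j)%N.
Proof.
move=> /forallP H i j.
have H' : forall i j : 'I_m, (i < j)%N -> (s i < s j)%N.
  by move=> x y; move/forallP: (H x) => /(_ y) /implyP.
case: (ltngtP i j) => [/H' -> // | /H' lt | e].
  by apply/negbTE; rewrite -leqNgt ltnW.
by rewrite (val_inj e) ltnn.
Qed.

Lemma incr_inj (s : {ffun 'I_m -> 'I_n}) : incr s -> injective s.
Proof.
move=> Hs i j e; apply/eqP; rewrite -val_eqE /=.
have h1 := incr_lt Hs i j; have h2 := incr_lt Hs j i.
rewrite e ltnn in h1 h2.
by case: (ltngtP i j) h1 h2 => // -> .
Qed.

Definition imT (s : {ffun 'I_m -> 'I_n}) : {set 'I_n} := [set s i | i in 'I_m].

Lemma card_imT (s : {ffun 'I_m -> 'I_n}) : injective s -> #|imT s| = m.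
Proof. by move=> Hs; rewrite card_imset // card_ord. Qed.

Lemma incr_cnt s (Hs : incr s) (i : 'I_m) :
  #|[set y in imT s | (y < s i)%N]| = #|[set j : 'I_m | (j < i)%N]|.
Proof.
have -> : [set y in imT s | (y < s i)%N] = s @: [set j : 'I_m | (j < i)%N].
  apply/setP => y; rewrite !inE; apply/andP/imsetP.
    by case=> /imsetP [j _ ->] lt; exists j; rewrite // inE -(incr_lt Hs).
  by case=> j; rewrite inE => ji ->; rewrite imset_f // (incr_lt Hs).
by rewrite card_imset //; apply: incr_inj.
Qed.

Lemma cnt_inj (i j : 'I_m) :
  #|[set k : 'I_m | (k < i)%N]| = #|[set k : 'I_m | (k < j)%N]| -> i = j.
Proof.
have P : forall x y : 'I_m, (x < y)%N ->
    (#|[set k : 'I_m | (k < x)%N]| < #|[set k : 'I_m | (k < y)%N]|)%N.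
  move=> x y xy; apply: proper_card; apply/properP; split.
    by apply/subsetP => k; rewrite !inE => /ltn_trans; apply.
  by exists x; rewrite !inE ?ltnn.
case: (ltngtP i j) => [/P h e | /P h e | /val_inj //].
  by rewrite e ltnn in h.
by rewrite e ltnn in h.
Qed.

Lemma incr_uniq (S U : {ffun 'I_m -> 'I_n}) : incr S -> incr U ->
  imT S = imT U -> S = U.
Proof.
move=> HS HU E; apply/ffunP => i.
have : S i \in imT U by rewrite -E imset_f.
case/imsetP => j _ e.
have : #|[set y in imT S | (y < S i)%N]| = #|[set y in imT U | (y < U j)%N]|.
  by rewrite E e.
by rewrite incr_cnt // incr_cnt // => /cnt_inj ij; rewrite e ij.
Qed.

Lemma incr_sub_eq (S U : {ffun 'I_m -> 'I_n}) : incr S -> incr U ->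
  imT S \subset imT U -> S = U.
Proof.
move=> HS HU sub; apply: incr_uniq => //; apply/eqP; rewrite eqEcard sub.
rewrite (card_imT (incr_inj HS)) (card_imT (incr_inj HU)).
by rewrite leqnn.
Qed.

Lemma exists_sort (f : 'I_m -> 'I_n) : injective f ->
  exists T : wb n m, exists s : 'S_m, forall i, f i = val T (s i).
Proof.
move=> finj.
set A := [set f i | i in 'I_m].
have cA : #|A| = m by rewrite card_imset // card_ord.
set e := [seq x <- enum 'I_n | x \in A].
have ue : uniq e by rewrite filter_uniq // enum_uniq.
have me : e =i A by move=> x; rewrite mem_filter mem_enum andbT.
have se : size e = m.
  by rewrite -cA -(card_uniqP ue); apply: eq_card.
have sorte : sorted (relpre val ltn) e.
  apply: sorted_filter; first by move=> x y z /= ; apply: ltn_trans.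
  by rewrite -sorted_map val_enum_ord iota_ltn_sorted.
pose T := [ffun i : 'I_m => nth (f i) e i].
have Ti : incr T.
  apply/forallP => i; apply/forallP => j; apply/implyP => ij; rewrite !ffunE.
  have tr : @transitive 'I_n (relpre val ltn).
    by move=> x y z xy yz; exact: (ltn_trans xy yz).
  have := sorted_ltn_nth tr (f i) sorte.
  move=> /(_ i j); rewrite !inE se !ltn_ord => H.
  rewrite [nth (f j) e j](set_nth_default (f i)); last by rewrite se.
  exact: (H isT isT ij).
exists (exist _ T Ti).
have gP : forall i, (index (f i) e < m)%N.
  by move=> i; rewrite -se index_mem me imset_f.
pose g := fun i : 'I_m => Ordinal (gP i).
have ginj : injective g.
  move=> i j /(congr1 val) /= e'.
  apply: finj; rewrite -(nth_index (f i) (x := f i) (s := e)) ?me ?imset_f //.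
  by rewrite e' nth_index // me imset_f.
exists (perm ginj) => i /=; rewrite permE ffunE /=.
by rewrite nth_index // me imset_f.
Qed.

End Comb.

Section CB.
Variable F : fieldType.

Lemma cb_stepA p n (X : 'M[F]_(p,n)) (Y : 'M[F]_(n,p)) :
  \det (X *m Y) = \sum_(f : {ffun 'I_p -> 'I_n})
     (\prod_i X i (f i)) * \det (rowsub f Y).
Proof.
transitivity (\sum_(s : 'S_p) \sum_(f : {ffun 'I_p -> 'I_n})
     (-1) ^+ s * \prod_i (X i (f i) * Y (f i) (s i))).
  apply: eq_bigr => s _; rewrite -big_distrr /=; congr (_ * _).
  rewrite -(bigA_distr_bigA (fun i k => X i k * Y k (s i))) /=.
  by apply: eq_bigr => i _; rewrite mxE.
rewrite exchange_big; apply: eq_bigr => f _.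
rewrite /(\det _) big_distrr /=; apply: eq_bigr => s _.
rewrite big_split /= mulrCA; congr (_ * (_ * _)).
by apply: eq_bigr => i _; rewrite mxE.
Qed.

Lemma cb_stepB p n (X : 'M[F]_(p,n)) (Y : 'M[F]_(n,p)) :
  \det (X *m Y) = \sum_(f : {ffun 'I_p -> 'I_n} | injectiveb f)
     (\prod_i X i (f i)) * \det (rowsub f Y).
Proof.
rewrite cb_stepA (bigID (fun f : {ffun 'I_p -> 'I_n} => injectiveb f)) /=.
rewrite [X in _ + X]big1 ?addr0 // => f /injectivePn [i1 [i2 Di12 Ef12]].
rewrite (determinant_alternate Di12) ?mulr0 // => j.
by rewrite !mxE Ef12.
Qed.

Definition cmp n p (x : wb n p * 'S_p) : {ffun 'I_p -> 'I_n} :=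
  [ffun i => val x.1 (x.2 i)].

Lemma cmp_inj n p : injective (@cmp n p).
Proof.
move=> [T s] [T' s'] /ffunP /= E.
have HT := valP T; have HT' := valP T'.
have eT : T = T'.
  apply: val_inj; apply: incr_uniq => //; apply/setP => y.
  apply/imsetP/imsetP => [] [i _ ->].
    by exists (s' (s^-1 i))%g => //; move: (E (s^-1 i)%g); rewrite !ffunE permKV.
  by exists (s (s'^-1 i))%g => //; move: (E (s'^-1 i)%g); rewrite !ffunE permKV.
subst T'; congr pair; apply/permP => i.
by apply: (incr_inj HT); move: (E i); rewrite !ffunE.
Qed.

Lemma cmp_image n p : [set f : {ffun 'I_p -> 'I_n} | injectiveb f] = (@cmp n p) @: setT.
Proof.
apply/setP => f; rewrite inE; apply/idP/imsetP.
  move/injectiveP => finj; have [T [s Hs]] := exists_sort finj.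
  by exists (T, s) => //; apply/ffunP => i; rewrite ffunE.
case=> [[T s]] _ ->; apply/injectiveP => i j; rewrite !ffunE /=.
by move/(incr_inj (valP T)); apply: perm_inj.
Qed.

Lemma cauchy_binet p n (X : 'M[F]_(p,n)) (Y : 'M[F]_(n,p)) :
  \det (X *m Y) = \sum_(T : wb n p) \det (colsub (val T) X) * \det (rowsub (val T) Y).
Proof.
rewrite cb_stepB.
rewrite (eq_bigl (fun f => f \in [set f : {ffun 'I_p -> 'I_n} | injectiveb f])); last by move=> f; rewrite inE.
rewrite cmp_image big_imset /=; last by move=> x y _ _; apply: cmp_inj.
rewrite (eq_bigl predT); last by move=> x; rewrite inE.
pose G (x : wb n p * 'S_p) := \prod_(i0 < p) X i0 (cmp x i0) * \det (rowsub (cmp x) Y).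
rewrite -/(\sum_(x : wb n p * 'S_p) G x).
transitivity (\sum_T \sum_(s : 'S_p) G (T, s)).
  by rewrite pair_bigA; apply: eq_bigr => [[T s]].
apply: eq_bigr => T _; rewrite /G.
rewrite /(\det (colsub _ _)) big_distrl /=; apply: eq_bigr => s _.
have -> : rowsub (cmp (T, s)) Y = row_perm s (rowsub (val T) Y).
  by apply/matrixP => i j; rewrite !mxE ffunE.
rewrite row_permE det_mulmx det_perm mulrA; congr (_ * _); rewrite mulrC.
by congr (_ * _); apply: eq_bigr => i _; rewrite mxE ffunE.
Qed.

End CB.

Section Cmpd.
Variable F : fieldType.
Variables n m : nat.

Definition Cm (A : 'M[F]_n) : 'M[F]_#|{: wb n m}| :=
  \matrix_(i, j) compound A (enum_val i) (enum_val j).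

Lemma sum_wb (G : wb n m -> F) :
  \sum_(T : wb n m) G T = \sum_(k < #|{: wb n m}|) G (enum_val k).
Proof. by rewrite -big_enum_val; apply: eq_bigl => x; rewrite inE. Qed.

Lemma CmM (A B : 'M[F]_n) : Cm (A *m B) = Cm A *m Cm B.
Proof.
apply/matrixP => i j; rewrite !mxE.
set S := enum_val i; set U := enum_val j.
rewrite /compound.
have -> : \matrix_(i0, j0) (A *m B) (sval S i0) (sval U j0) =
          rowsub (sval S) A *m colsub (sval U) B.
  by rewrite -mxsub_mul; apply/matrixP => x y; rewrite !mxE.
rewrite cauchy_binet sum_wb; apply: eq_bigr => k _; rewrite !mxE /compound.
congr (_ * _); congr (\det _); apply/matrixP => x y; by rewrite !mxE.
Qed.

Lemma Cm1 : Cm 1%:M = 1%:M.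
Proof.
apply/matrixP => i j; rewrite !mxE /compound.
case: (eqVneq i j) => [<-|ne].
  set S := enum_val i; have HS := valP S.
  have -> : \matrix_(i0, j0) (1%:M : 'M[F]_n) (sval S i0) (sval S j0) = 1%:M.
    by apply/matrixP => x y; rewrite !mxE (inj_eq (incr_inj HS)).
  by rewrite det1.
set S := enum_val i; set U := enum_val j.
have HS := valP S; have HU := valP U.
have SU : sval S <> sval U.
  by move=> /val_inj /enum_val_inj E; rewrite E eqxx in ne.
case: (pickP (fun b => sval U b \notin imT (sval S))) => [b Hb | H].
  rewrite (expand_det_col _ b) big1 // => a _; rewrite !mxE.
  case: eqP => [e|_]; last by rewrite mul0r.
  by move: Hb; rewrite -e imset_f.
exfalso; apply: SU; apply: esym; apply: incr_sub_eq => //.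
apply/subsetP => y /imsetP [b _ ->]; move: (H b) => /= /negbFE //.
Qed.

Lemma Cm_unit (A : 'M[F]_n) : A \in unitmx -> Cm A \in unitmx.
Proof.
move=> Au; have := CmM A (invmx A); rewrite mulmxV // Cm1 => /esym.
by case/mulmx1_unit.
Qed.

Definition Dm a b : 'M[F]_#|{: wb n m}| :=
  diag_mx (\row_k (selected a b (enum_val k))%:R).

Lemma lamE a b (B B' : 'M[F]_n) : lam a b B B' m = Cm (invmx B) *m Dm a b *m Cm B'.
Proof.
apply/matrixP => i j; rewrite !mxE /lamf sum_wb; apply: eq_bigr => k _.
rewrite mul_mx_diag !mxE; case: (selected _ _ _).
  by rewrite mulr1.
by rewrite mulr0 mul0r.
Qed.

Lemma rank_lam a b (B B' : 'M[F]_n) : B \in unitmx -> B' \in unitmx ->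
  \rank (lam a b B B' m) = \rank (Dm a b).
Proof.
move=> Bu B'u; rewrite lamE mxrankMfree; last by rewrite row_free_unit Cm_unit.
by rewrite (eqmxMfull _ (_ : row_full _)) // row_full_unit Cm_unit // unitmx_inv.
Qed.

Lemma Dm_eq0 a b : (Dm a b == 0) = ~~ [exists T : wb n m, selected a b T].
Proof.
apply/eqP/existsPn => [H T | H].
  move/matrixP: H => /(_ (enum_rank T) (enum_rank T)); rewrite !mxE eqxx mulr1n enum_rankK.
  by case: (selected _ _ _) => //= /eqP; rewrite oner_eq0.
apply/matrixP => x y; rewrite !mxE; by rewrite (negbTE (H _)) mul0rn.
Qed.

Lemma Dm_delta a b T0 : (forall T : wb n m, selected a b T = (T == T0)) ->
  Dm a b = delta_mx (enum_rank T0) (enum_rank T0).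
Proof.
move=> H; apply/matrixP => x y; rewrite !mxE H.
rewrite -(inj_eq enum_rank_inj) enum_valK.
case: (eqVneq x y) => [<-|ne]; first by rewrite andbb mulr1n.
rewrite mulr0n; case: (eqVneq x (enum_rank T0)) => [ex|] //=.
by rewrite ex eq_sym in ne; rewrite (negbTE ne).
Qed.

End Cmpd.

Section Sel.
Variable n : nat.

Lemma io_incr r (h : (r <= n)%N) : incr [ffun i : 'I_r => widen_ord h i].
Proof. by apply/forallP => i; apply/forallP => j; apply/implyP; rewrite !ffunE. Qed.

Definition io r (h : (r <= n)%N) : wb n r := exist (fun s => is_true (incr s)) _ (io_incr h).

Lemma imT_io r (h : (r <= n)%N) (y : 'I_n) : (y \in imT (val (io h))) = (y < r)%N.
Proof.
apply/imsetP/idP => [[i _ ->] | yr]; first by rewrite ffunE /= ltn_ord.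
by exists (Ordinal yr) => //; rewrite ffunE; apply: val_inj.
Qed.

Lemma sel_io a b m (h : (m <= n)%N) : (a <= m)%N -> (m <= a + b)%N ->
  selected a b (io h).
Proof.
move=> am mab; apply/andP; split.
  apply/forallP => i; apply/implyP => ia.
  have im : (i < m)%N by apply: leq_trans am.
  by apply/existsP; exists (Ordinal im); rewrite ffunE; apply/eqP/val_inj.
by apply/forallP => j; rewrite ffunE /=; apply: leq_trans mab.
Qed.

Lemma card_widen r (h : (r <= n)%N) : #|[set widen_ord h i | i in 'I_r]| = r.
Proof.
rewrite card_imset ?card_ord // => x y /(congr1 val) /= e; exact: val_inj.
Qed.

Lemma sel_bounds a b m (T : wb n m) : (a + b <= n)%N -> selected a b T ->
  (a <= m)%N && (m <= a + b)%N.
Proof.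
move=> abn /andP [/forallP H1 /forallP H2].
have HT := valP T.
have an : (a <= n)%N by apply: leq_trans abn; apply: leq_addr.
apply/andP; split.
  rewrite -(card_imT (incr_inj HT)).
  rewrite -{1}(card_widen an).
  apply: subset_leq_card; apply/subsetP => y /imsetP [i _ ->].
  move: (H1 (widen_ord an i)) => /implyP /= /(_ (ltn_ord i)) /existsP [j /eqP <-].
  exact: imset_f.
rewrite -(card_imT (incr_inj HT)).
rewrite -(card_widen abn).
apply: subset_leq_card; apply/subsetP => y /imsetP [j _ ->].
apply/imsetP; exists (Ordinal (H2 j)) => //; exact: val_inj.
Qed.

Lemma sel_a a b (ha : (a <= n)%N) (T : wb n a) : (a + b <= n)%N ->
  selected a b T = (T == io ha).
Proof.
move=> abn; apply/idP/eqP => [/andP [/forallP H1 _] | ->]; last first.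
  by apply: sel_io => //; apply: leq_addr.
apply: val_inj; apply: esym; apply: incr_sub_eq; [exact: valP | exact: valP |].
apply/subsetP => y; rewrite imT_io => ya.
by move: (H1 y) => /implyP /(_ ya) /existsP [j /eqP <-]; apply: imset_f.
Qed.

Lemma sel_ab a b (h : (a + b <= n)%N) (T : wb n (a + b)) :
  selected a b T = (T == io h).
Proof.
apply/idP/eqP => [/andP [_ /forallP H2] | ->]; last first.
  by apply: sel_io => //; apply: leq_addr.
apply: val_inj; apply: incr_sub_eq; [exact: valP | exact: valP |].
apply/subsetP => y /imsetP [j _ ->]; rewrite imT_io; exact: H2.
Qed.

End Sel.

Section Sub.
Variable F : fieldType.
Variable n : nat.
Local Notation W0 := (row_mx (0 : 'M[F]_n) (1%:M : 'M[F]_n)).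
Local Notation W1 := (row_mx (1%:M : 'M[F]_n) (0 : 'M[F]_n)).

Lemma lsub_sub k1 k2 (X : 'M[F]_(k1, n + n)) (Y : 'M[F]_(k2, n + n)) :
  (X <= Y)%MS -> (lsubmx X <= lsubmx Y)%MS.
Proof. by case/submxP => K ->; rewrite -mulmx_lsub submxMl. Qed.

Lemma rsub_sub k1 k2 (X : 'M[F]_(k1, n + n)) (Y : 'M[F]_(k2, n + n)) :
  (X <= Y)%MS -> (rsubmx X <= rsubmx Y)%MS.
Proof. by case/submxP => K ->; rewrite -mulmx_rsub submxMl. Qed.

Lemma lsub_eq k1 k2 (X : 'M[F]_(k1, n + n)) (Y : 'M[F]_(k2, n + n)) :
  (X == Y)%MS -> (lsubmx X == lsubmx Y)%MS.
Proof. by case/andP => h1 h2; rewrite !lsub_sub. Qed.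

Lemma rsub_eq k1 k2 (X : 'M[F]_(k1, n + n)) (Y : 'M[F]_(k2, n + n)) :
  (X == Y)%MS -> (rsubmx X == rsubmx Y)%MS.
Proof. by case/andP => h1 h2; rewrite !rsub_sub. Qed.

Lemma eqmx_tr k1 k2 k3 (X : 'M[F]_(k1, n)) (Y : 'M[F]_(k2, n)) (Z : 'M[F]_(k3, n)) :
  (X == Y)%MS -> (Y == Z)%MS -> (X == Z)%MS.
Proof.
case/andP => h1 h2 /andP [h3 h4]; apply/andP; split.
  exact: submx_trans h1 h3.
exact: submx_trans h4 h2.
Qed.

Lemma eqmx_sy k1 k2 (X : 'M[F]_(k1, n)) (Y : 'M[F]_(k2, n)) :
  (X == Y)%MS -> (Y == X)%MS.
Proof. by case/andP => h1 h2; apply/andP. Qed.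

Lemma Indef_char k k2 (M : 'M[F]_(k, n + n)) (X : 'M[F]_(k2, n)) :
  (row_mx 0 X <= M)%MS ->
  (forall k' (K : 'M[F]_(k', k)), lsubmx (K *m M) = 0 -> (K *m M <= row_mx 0 X)%MS) ->
  (Indef M == X)%MS.
Proof.
move=> h1 h2.
have E : (M :&: W0 == row_mx 0 X)%MS.
  apply/andP; split.
    have CM := capmxSl M W0; rewrite -(mulmxKpV CM); apply: h2.
    rewrite (mulmxKpV CM); have := capmxSr M W0; case/submxP => L ->.
    by rewrite mul_mx_row mulmx0 row_mxKl.
  rewrite sub_capmx h1 /=.
  have -> : row_mx (0 : 'M[F]_(k2, n)) X = X *m W0 by rewrite mul_mx_row mulmx0 mulmx1.
  exact: submxMl.
by have := rsub_eq E; rewrite row_mxKr.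
Qed.

Lemma Ker_char k k2 (M : 'M[F]_(k, n + n)) (X : 'M[F]_(k2, n)) :
  (row_mx X 0 <= M)%MS ->
  (forall k' (K : 'M[F]_(k', k)), rsubmx (K *m M) = 0 -> (K *m M <= row_mx X 0)%MS) ->
  (Ker M == X)%MS.
Proof.
move=> h1 h2.
have E : (M :&: W1 == row_mx X 0)%MS.
  apply/andP; split.
    have CM := capmxSl M W1; rewrite -(mulmxKpV CM); apply: h2.
    rewrite (mulmxKpV CM); have := capmxSr M W1; case/submxP => L ->.
    by rewrite mul_mx_row mulmx0 row_mxKr.
  rewrite sub_capmx h1 /=.
  have -> : row_mx X (0 : 'M[F]_(k2, n)) = X *m W1 by rewrite mul_mx_row mulmx0 mulmx1.
  exact: submxMl.
by have := lsub_eq E; rewrite row_mxKl.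
Qed.

Section Block.
Variables k1 k2 : nat.
Variables (X : 'M[F]_(k1, n)) (Y : 'M[F]_(k2, n)).
Let M := col_mx (row_mx X 0) (row_mx (0 : 'M[F]_(k2, n)) Y).

Lemma blockKM k' (K : 'M[F]_(k', k1 + k2)) :
  K *m M = row_mx (lsubmx K *m X) (rsubmx K *m Y).
Proof.
rewrite -{1}(hsubmxK K) mul_row_col !mul_mx_row !mulmx0 add_row_mx.
by rewrite addr0 add0r.
Qed.

Lemma block_Indef : (Indef M == Y)%MS.
Proof.
apply: Indef_char.
  have -> : row_mx 0 Y = row_mx (0 : 'M[F]_(k2, k1)) 1%:M *m M.
    by rewrite blockKM row_mxKl row_mxKr mul0mx mul1mx.
  exact: submxMl.
move=> k' K; rewrite blockKM row_mxKl => ->.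
have -> : row_mx (0 : 'M[F]_(k', n)) (rsubmx K *m Y) = rsubmx K *m row_mx 0 Y.
  by rewrite mul_mx_row mulmx0.
by apply/submxP; exists (rsubmx K).
Qed.

Lemma block_Ker : (Ker M == X)%MS.
Proof.
apply: Ker_char.
  have -> : row_mx X 0 = row_mx (1%:M : 'M[F]_k1) 0 *m M.
    by rewrite blockKM row_mxKl row_mxKr mul0mx mul1mx.
  exact: submxMl.
move=> k' K; rewrite blockKM row_mxKr => ->.
have -> : row_mx (lsubmx K *m X) (0 : 'M[F]_(k', n)) = lsubmx K *m row_mx X 0.
  by rewrite mul_mx_row mulmx0.
by apply/submxP; exists (lsubmx K).
Qed.

Lemma col0_eq k3 k4 (Z : 'M[F]_(k3, n)) : (col_mx Z (0 : 'M[F]_(k4, n)) == Z)%MS.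
Proof.
apply/andP; split; first by rewrite col_mx_sub submx_refl sub0mx.
rewrite {1}(_ : Z = row_mx 1%:M 0 *m col_mx Z (0 : 'M[F]_(k4, n))); last first.
  by rewrite mul_row_col mul1mx mul0mx addr0.
exact: submxMl.
Qed.

Lemma col0_eq' k3 k4 (Z : 'M[F]_(k3, n)) : (col_mx (0 : 'M[F]_(k4, n)) Z == Z)%MS.
Proof.
apply/andP; split; first by rewrite col_mx_sub submx_refl sub0mx.
rewrite {1}(_ : Z = row_mx 0 1%:M *m col_mx (0 : 'M[F]_(k4, n)) Z); last first.
  by rewrite mul_row_col mul1mx mul0mx add0r.
exact: submxMl.
Qed.

Lemma block_Dom : (Dom M == X)%MS.
Proof.
rewrite /Dom /M -[col_mx _ _]/(block_mx X 0 0 Y) block_mxEh row_mxKl.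
exact: col0_eq.
Qed.

Lemma block_Im : (Im M == Y)%MS.
Proof.
rewrite /Im /M -[col_mx _ _]/(block_mx X 0 0 Y) block_mxEh row_mxKr.
exact: col0_eq'.
Qed.

Lemma block_rank : \rank M = (\rank X + \rank Y)%N.
Proof. exact: rank_diag_block_mx. Qed.

End Block.

End Sub.

Section Adapt.
Variable F : fieldType.
Variable n : nat.
Local Notation W0 := (row_mx (0 : 'M[F]_n) (1%:M : 'M[F]_n)).
Local Notation W1 := (row_mx (1%:M : 'M[F]_n) (0 : 'M[F]_n)).
Local Notation pidn r := (pid_mx r : 'M[F]_n).

Lemma diag_copid a : diag_mx (\row_(i < n) ((a <= i)%N)%:R) = copid_mx a :> 'M[F]_n.
Proof.
apply/matrixP => i j; rewrite !mxE; case: (eqVneq i j) => [<-|ne].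
  by rewrite eqxx mulr1n; case: (ltnP i a) => h; rewrite ?subrr ?subr0.
rewrite mulr0n; case: eqP => [/val_inj e|_]; first by rewrite e eqxx in ne.
by rewrite subrr.
Qed.

Lemma diag_pid r : diag_mx (\row_(i < n) ((i < r)%N)%:R) = pid_mx r :> 'M[F]_n.
Proof.
apply/matrixP => i j; rewrite !mxE; case: (eqVneq i j) => [<-|ne].
  by rewrite eqxx mulr1n.
by rewrite mulr0n; case: eqP => // /val_inj e; rewrite e eqxx in ne.
Qed.

Lemma adapted_genE a b (B B' : 'M[F]_n) :
  adapted_gen a b B B' = row_mx (copid_mx a *m B) (pid_mx (a + b) *m B').
Proof. by rewrite /adapted_gen diag_copid diag_pid. Qed.

Lemma pid_pid r s : (r <= s)%N -> (r <= n)%N ->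
  (pid_mx r : 'M[F]_n) *m (pid_mx s : 'M[F]_n) = pid_mx r.
Proof.
move=> rs rn; rewrite mul_pid_mx.
by rewrite (minn_idPl rs) (minn_idPr rn).
Qed.

Lemma pid_pid' r s : (r <= s)%N -> (r <= n)%N ->
  (pid_mx s : 'M[F]_n) *m (pid_mx r : 'M[F]_n) = pid_mx r.
Proof.
move=> rs rn; rewrite mul_pid_mx.
by rewrite (minn_idPr rs) (minn_idPr rn).
Qed.

Lemma pidG a b (B B' : 'M[F]_n) : (a + b <= n)%N ->
  pidn a *m adapted_gen a b B B' = row_mx 0 (pidn a *m B').
Proof.
move=> abn; have an : (a <= n)%N by apply: leq_trans abn; apply: leq_addr.
rewrite adapted_genE mul_mx_row !mulmxA mul_pid_mx_copid // mul0mx.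
by rewrite pid_pid // leq_addr.
Qed.

Lemma copidG a b (B B' : 'M[F]_n) : (a + b <= n)%N ->
  copid_mx (a + b) *m adapted_gen a b B B' = row_mx (copid_mx (a + b) *m B) 0.
Proof.
move=> abn; have an : (a <= n)%N by apply: leq_trans abn; apply: leq_addr.
rewrite adapted_genE mul_mx_row !mulmxA mul_copid_mx_pid // mul0mx.
congr (row_mx (_ *m B) _).
rewrite {2}/copid_mx mulmxBr mulmx1 /copid_mx mulmxBl mul1mx pid_pid' ?leq_addr //.
by rewrite subrr subr0.
Qed.

Lemma adapted_facts k (P : 'M[F]_(k, n + n)) a b B B' : adapted P a b B B' ->
  [/\ (Dom P == copid_mx a *m B)%MS, (Im P == pidn (a + b) *m B')%MS,
      (Indef P == pidn a *m B')%MS & (Ker P == copid_mx (a + b) *m B)%MS].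
Proof.
case/and4P => abn Bu B'u GP.
have an : (a <= n)%N by apply: leq_trans abn; apply: leq_addr.
set G := adapted_gen a b B B' in GP.
have [GsP PsG] := andP GP.
have GE := adapted_genE a b B B'.
split.
- apply: eqmx_sy; have := lsub_eq GP; rewrite /G GE row_mxKl; exact.
- apply: eqmx_sy; have := rsub_eq GP; rewrite /G GE row_mxKr; exact.
- apply: Indef_char.
    rewrite -(@pidG a b B B') //; apply: submx_trans GsP; exact: submxMl.
  move=> k' K; case/submxP: PsG => L ->; rewrite mulmxA; set K' := K *m L.
  rewrite -mulmx_lsub /G GE row_mxKl mulmxA => H0.
  have H1 : K' *m copid_mx a = 0.
    by rewrite -(mulmxK Bu (K' *m copid_mx a)) H0 mul0mx.
  have H2 : K' = K' *m pidn a.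
    by apply/eqP; rewrite -subr_eq0 -{1}(mulmx1 K') -mulmxBr -/(copid_mx a) H1.
  by rewrite H2 -mulmxA -GE pidG // submxMl.
- apply: Ker_char.
    rewrite -(@copidG a b B B') //; apply: submx_trans GsP; exact: submxMl.
  move=> k' K; case/submxP: PsG => L ->; rewrite mulmxA; set K' := K *m L.
  rewrite -mulmx_rsub /G GE row_mxKr mulmxA => H0.
  have H1 : K' *m pidn (a + b) = 0.
    by rewrite -(mulmxK B'u (K' *m pidn (a + b))) H0 mul0mx.
  have H2 : K' = K' *m copid_mx (a + b).
    by rewrite /copid_mx mulmxBr mulmx1 H1 subr0.
  by rewrite H2 -mulmxA -GE copidG // submxMl.
Qed.

Lemma rank_pidM r (A : 'M[F]_n) : (r <= n)%N -> A \in unitmx ->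
  \rank (pidn r *m A) = r.
Proof. by move=> rn Au; rewrite mxrankMfree ?row_free_unit // rank_pid_mx. Qed.

Lemma rank_copidM r (A : 'M[F]_n) : (r <= n)%N -> A \in unitmx ->
  \rank (copid_mx r *m A) = (n - r)%N.
Proof. by move=> rn Au; rewrite mxrankMfree ?row_free_unit // rank_copid_mx. Qed.

Lemma rank_sub0 k (C : 'M[F]_(k, n + n)) : (C <= W0)%MS -> \rank (rsubmx C) = \rank C.
Proof.
case/submxP => L ->; rewrite mul_mx_row mulmx0 mulmx1 row_mxKr.
by rewrite rank_row_0mx.
Qed.

Lemma rank_sub1 k (C : 'M[F]_(k, n + n)) : (C <= W1)%MS -> \rank (lsubmx C) = \rank C.
Proof.
case/submxP => L ->; rewrite mul_mx_row mulmx0 mulmx1 row_mxKl.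
by rewrite rank_row_mx0.
Qed.

Lemma rank_DomIndef k (P : 'M[F]_(k, n + n)) :
  (\rank (Dom P) + \rank (Indef P))%N = \rank P.
Proof.
pose E := col_mx (1%:M : 'M[F]_n) (0 : 'M[F]_(n, n)).
have PE : P *m E = Dom P by rewrite -{1}(hsubmxK P) mul_row_col mulmx1 mulmx0 addr0.
rewrite -(mxrank_mul_ker P E) PE; congr addn.
have KE : (W0 == kermx E)%MS.
  have sub : (W0 <= kermx E)%MS.
    by apply/sub_kermxP; rewrite mul_row_col mulmx1 mulmx0 addr0.
  rewrite -(mxrank_leqif_eq sub).2 mxrank_ker rank_col_mx0 rank_row_0mx !mxrank1.
  by rewrite addnK.
rewrite /Indef rank_sub0 ?capmxSr //.
by apply: eqmx_rank; apply/eqmxP; apply: cap_eqmx => //; apply/eqmxP.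
Qed.

Lemma rank_ImKer k (P : 'M[F]_(k, n + n)) :
  (\rank (Im P) + \rank (Ker P))%N = \rank P.
Proof.
pose E := col_mx (0 : 'M[F]_(n, n)) (1%:M : 'M[F]_n).
have PE : P *m E = Im P by rewrite -{1}(hsubmxK P) mul_row_col mulmx1 mulmx0 add0r.
rewrite -(mxrank_mul_ker P E) PE; congr addn.
have KE : (W1 == kermx E)%MS.
  have sub : (W1 <= kermx E)%MS.
    by apply/sub_kermxP; rewrite mul_row_col mulmx1 mulmx0 addr0.
  rewrite -(mxrank_leqif_eq sub).2 mxrank_ker.
  have -> : \rank E = n.
    by rewrite (eqmx_rank (col0_eq' _ _)) mxrank1.
  by rewrite rank_row_mx0 !mxrank1 addnK.
rewrite /Ker rank_sub1 ?capmxSr //.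
by apply: eqmx_rank; apply/eqmxP; apply: cap_eqmx => //; apply/eqmxP.
Qed.

End Adapt.

Section Plk.
Variable F : fieldType.
Variable n : nat.
Local Notation pidn r := (pid_mx r : 'M[F]_n).

Lemma plucker r (X Y : 'M[F]_(r, n)) : (X == Y)%MS -> \rank Y = r ->
  exists2 c : F, c != 0 &
    forall U : wb n r, \det (colsub (val U) X) = c * \det (colsub (val U) Y).
Proof.
move=> XY rY; have /andP [sXY _] := XY.
set K := X *m pinvmx Y.
have XE : X = K *m Y by rewrite mulmxKpV.
exists (\det K).
  rewrite -unitfE -unitmxE -row_full_unit -col_leq_rank.
  by rewrite -{1}rY -(eqmx_rank XY) {1}XE mxrankM_maxl.
by move=> U; rewrite {1}XE -mulmx_colsub det_mulmx.
Qed.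

Lemma compound_rows m (A : 'M[F]_n) (T U : wb n m) :
  compound A T U = \det (colsub (val U) (rowsub (val T) A)).
Proof. by rewrite /compound; congr (\det _); apply/matrixP => i j; rewrite !mxE. Qed.

Lemma compound_cols m (A : 'M[F]_n) (S T : wb n m) :
  compound A S T = \det (colsub (val S) (colsub (val T) A)^T).
Proof.
rewrite /compound -det_tr; congr (\det _); apply/matrixP => i j; by rewrite !mxE.
Qed.

Lemma rowsub_io r (hr : (r <= n)%N) :
  rowsub (val (io hr)) (1%:M : 'M[F]_n) = pid_mx r.
Proof.
apply/matrixP => i j; rewrite !mxE ffunE /= ltn_ord andbT.
by congr (_%:R); congr (nat_of_bool _); rewrite -val_eqE.
Qed.

Lemma colsub_io r (hr : (r <= n)%N) :
  colsub (val (io hr)) (1%:M : 'M[F]_n) = pid_mx r.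
Proof.
apply/matrixP => i j; rewrite !mxE ffunE /=.
rewrite -val_eqE /=; case: eqP => [-> | _] //=; by rewrite ltn_ord.
Qed.

Lemma rows_io_eq r (hr : (r <= n)%N) (A : 'M[F]_n) :
  (rowsub (val (io hr)) A == pidn r *m A)%MS.
Proof.
rewrite rowsubE rowsub_io; apply/andP; split.
  rewrite -{1}(_ : (pid_mx r : 'M[F]_(r, n)) *m pidn r = pid_mx r).
    by rewrite -mulmxA submxMl.
  by rewrite mul_pid_mx minnn (minn_idPr hr).
rewrite -{1}(_ : (pid_mx r : 'M[F]_(n, r)) *m (pid_mx r : 'M[F]_(r, n)) = pidn r).
  by rewrite -mulmxA submxMl.
by rewrite mul_pid_mx !minnn.
Qed.

Lemma rank_rows_io r (hr : (r <= n)%N) (A : 'M[F]_n) : A \in unitmx ->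
  \rank (rowsub (val (io hr)) A) = r.
Proof.
move=> Au; rewrite rowsubE rowsub_io mxrankMfree ?row_free_unit //.
by rewrite rank_pid_mx.
Qed.

Definition Yio r (hr : (r <= n)%N) (A : 'M[F]_n) := (colsub (val (io hr)) (invmx A))^T.

Lemma YioE r (hr : (r <= n)%N) (A : 'M[F]_n) :
  Yio hr A = (pid_mx r : 'M[F]_(r, n)) *m (invmx A)^T.
Proof.
rewrite /Yio -[invmx A in LHS]mulmx1 -mulmx_colsub colsub_io trmx_mul.
by rewrite tr_pid_mx.
Qed.

Lemma rank_Yio r (hr : (r <= n)%N) (A : 'M[F]_n) : A \in unitmx -> \rank (Yio hr A) = r.
Proof.
move=> Au; rewrite YioE mxrankMfree ?row_free_unit ?unitmx_tr ?unitmx_inv //.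
by rewrite rank_pid_mx.
Qed.

Lemma Y_ker r (hr : (r <= n)%N) (A : 'M[F]_n) k (D : 'M[F]_(k, n)) :
  A \in unitmx -> (D <= copid_mx r *m A)%MS -> Yio hr A *m D^T = 0.
Proof.
move=> Au /submxP [L ->].
rewrite -[Yio hr A *m _]trmxK trmx_mul trmxK /Yio trmxK.
rewrite -[invmx A]mulmx1 -mulmx_colsub colsub_io !mulmxA -[L *m _ *m A *m _]mulmxA.
by rewrite mulmxV // mulmx1 -mulmxA mul_copid_mx_pid // mulmx0 trmx0.
Qed.

Lemma eq_via_ker r p (Y1 Y2 : 'M[F]_(r, n)) (E : 'M[F]_(n, p)) :
  (Y1 <= kermx E)%MS -> (Y2 <= kermx E)%MS -> \rank Y1 = r -> \rank Y2 = r ->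
  \rank (kermx E) = r -> (Y1 == Y2)%MS.
Proof.
move=> s1 s2 r1 r2 rK.
have e1 : (Y1 == kermx E)%MS by rewrite -(mxrank_leqif_eq s1).2 r1 rK.
have e2 : (Y2 == kermx E)%MS by rewrite -(mxrank_leqif_eq s2).2 r2 rK.
exact: eqmx_tr e1 (eqmx_sy e2).
Qed.

Lemma Y_eq r (hr : (r <= n)%N) (A C : 'M[F]_n) : A \in unitmx -> C \in unitmx ->
  (copid_mx r *m A == copid_mx r *m C)%MS -> (Yio hr A == Yio hr C)%MS.
Proof.
move=> Au Cu /andP [AC CA].
pose E := (copid_mx r *m A)^T.
apply: (@eq_via_ker _ _ _ _ E).
- by apply/sub_kermxP; apply: Y_ker.
- by apply/sub_kermxP; apply: Y_ker.
- exact: rank_Yio.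
- exact: rank_Yio.
by rewrite mxrank_ker mxrank_tr rank_copidM // subKn.
Qed.

Lemma prop_generic m (hm : (m <= n)%N) a b a' b' (B B' C C' : 'M[F]_n) :
  B \in unitmx -> B' \in unitmx -> C \in unitmx -> C' \in unitmx ->
  (copid_mx m *m B == copid_mx m *m C)%MS -> (pidn m *m B' == pidn m *m C')%MS ->
  (forall T : wb n m, selected a b T = (T == io hm)) ->
  (forall T : wb n m, selected a' b' T = (T == io hm)) ->
  exists2 c : F, c != 0 & lam a b B B' m = c *: lam a' b' C C' m.
Proof.
move=> Bu B'u Cu C'u E1 E2 S1 S2.
have [c1 c1n H1] : exists2 c : F, c != 0 & forall U : wb n m,
    \det (colsub (val U) (rowsub (val (io hm)) B')) =
    c * \det (colsub (val U) (rowsub (val (io hm)) C')).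
  apply: plucker; last exact: rank_rows_io.
  exact: eqmx_tr (rows_io_eq hm B') (eqmx_tr E2 (eqmx_sy (rows_io_eq hm C'))).
have [c2 c2n H2] : exists2 c : F, c != 0 & forall U : wb n m,
    \det (colsub (val U) (Yio hm B)) = c * \det (colsub (val U) (Yio hm C)).
  by apply: plucker; [exact: Y_eq | exact: rank_Yio].
exists (c2 * c1); first by rewrite mulf_neq0.
apply/matrixP => i j; rewrite !mxE /lamf.
rewrite (bigD1 (io hm)) ?S1 ?eqxx // big1 => [|T /negbTE TnE]; last by rewrite S1 TnE mulr0.
rewrite [X in _ = _ * X](bigD1 (io hm)) ?S2 ?eqxx // big1 => [|T /negbTE TnE]; last by rewrite S2 TnE mulr0.
rewrite !Monoid.mulm1 (compound_rows B') (compound_rows C').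
rewrite (compound_cols (invmx B)) (compound_cols (invmx C)) H1.
rewrite -/(Yio hm B) -/(Yio hm C) H2.
by rewrite mulrACA.
Qed.

End Plk.

Lemma sel_a' n a b m (hm : (m <= n)%N) (T : wb n m) : m = a -> (a + b <= n)%N ->
  selected a b T = (T == io hm).
Proof. by move=> e; subst m; apply: sel_a. Qed.

Lemma sel_ab' n a b m (hm : (m <= n)%N) (T : wb n m) : m = (a + b)%N ->
  selected a b T = (T == io hm).
Proof. by move=> e; subst m; apply: sel_ab. Qed.

Theorem lemma1p3 (F : fieldType) (n k : nat) (P : 'M[F]_(k, n + n)) (m : nat) :
  \rank P = n ->
  (* (a) *)
  lam_nonzero_iff m P ((\rank (Indef P) <= m)%N && (m <= \rank (Im P))%N)
  (* (b) *)
  /\ (m = \rank (Indef P) ->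
        lam_rank1 m P
        /\ (forall k' (Q : 'M[F]_(k', n + n)), \rank Q = n ->
              (Indef Q == Indef P)%MS -> (Dom Q == Dom P)%MS -> lam_prop m P Q)
        /\ (\rank (DomIndef P) = n /\ lam_prop m P (DomIndef P)))
  (* (c) *)
  /\ (m = \rank (Im P) ->
        lam_rank1 m P
        /\ (forall k' (R : 'M[F]_(k', n + n)), \rank R = n ->
              (Im R == Im P)%MS -> (Ker R == Ker P)%MS -> lam_prop m P R)
        /\ (\rank (KerIm P) = n /\ lam_prop m P (KerIm P))).
Proof.
move=> rP.
have rank_facts : forall k1 (Q : 'M[F]_(k1, n + n)) a b B B', adapted Q a b B B' ->
    \rank (Indef Q) = a /\ \rank (Im Q) = (a + b)%N.
  move=> k1 Q a b B B' ad; have [_ hI hN _] := adapted_facts ad.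
  case/and4P: ad => abn Bu B'u _.
  have an : (a <= n)%N by apply: leq_trans abn; apply: leq_addr.
  by rewrite (eqmx_rank hN) (eqmx_rank hI) !rank_pidM.
split.
  move=> a b B B' ad; have [-> ->] := rank_facts _ _ _ _ _ _ ad.
  case/and4P: (ad) => abn Bu B'u _.
  rewrite -mxrank_eq0 rank_lam // mxrank_eq0 Dm_eq0 negbK.
  apply/existsP/idP => [[T sT] | /andP [am mab]]; first exact: sel_bounds sT.
  have mn : (m <= n)%N by apply: leq_trans abn.
  by exists (io mn); apply: sel_io.
split.
  move=> Hm.
  have Qpart : forall k' (Q : 'M_(k', n + n)), \rank Q = n ->
      (Indef Q == Indef P)%MS -> (Dom Q == Dom P)%MS -> lam_prop m P Q.
    move=> k' Q rQ eI eD a b B B' a' b' C C' adP adQ.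
    have [rI _] := rank_facts _ _ _ _ _ _ adP.
    have [rI' _] := rank_facts _ _ _ _ _ _ adQ.
    have [dP _ iP _] := adapted_facts adP; have [dQ _ iQ _] := adapted_facts adQ.
    case/and4P: (adP) => abn Bu B'u _; case/and4P: (adQ) => abn' Cu C'u _.
    have em : m = a by rewrite Hm rI.
    have em' : m = a' by rewrite Hm -rI' (eqmx_rank eI).
    have mn : (m <= n)%N by rewrite em; apply: leq_trans abn; apply: leq_addr.
    rewrite -em in dP iP; rewrite -em' in dQ iQ.
    apply: (prop_generic (hm := mn)) => //.
    - exact: eqmx_tr (eqmx_sy dP) (eqmx_tr (eqmx_sy eD) dQ).
    - exact: eqmx_tr (eqmx_sy iP) (eqmx_tr (eqmx_sy eI) iQ).
    - by move=> T; apply: sel_a'.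
    - by move=> T; apply: sel_a'.
  split.
    move=> a b B B' ad; have [rI _] := rank_facts _ _ _ _ _ _ ad.
    case/and4P: (ad) => abn Bu B'u _.
    have em : m = a by rewrite Hm rI.
    have mn : (m <= n)%N by rewrite em; apply: leq_trans abn; apply: leq_addr.
    rewrite rank_lam // (@Dm_delta F n m a b (io mn)) ?mxrank_delta // => T.
    exact: sel_a'.
  split; first exact: Qpart.
  have rDI : \rank (DomIndef P) = n by rewrite /DomIndef block_rank rank_DomIndef.
  split => //; apply: Qpart => //; [exact: block_Indef | exact: block_Dom].
move=> Hm.
have Rpart : forall k' (R : 'M_(k', n + n)), \rank R = n ->
    (Im R == Im P)%MS -> (Ker R == Ker P)%MS -> lam_prop m P R.
  move=> k' R rR eI eK a b B B' a' b' C C' adP adR.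
  have [_ rI] := rank_facts _ _ _ _ _ _ adP.
  have [_ rI'] := rank_facts _ _ _ _ _ _ adR.
  have [_ mP _ kP] := adapted_facts adP; have [_ mR _ kR] := adapted_facts adR.
  case/and4P: (adP) => abn Bu B'u _; case/and4P: (adR) => abn' Cu C'u _.
  have em : m = (a + b)%N by rewrite Hm rI.
  have em' : m = (a' + b')%N by rewrite Hm -rI' (eqmx_rank eI).
  have mn : (m <= n)%N by rewrite em.
  rewrite -em in mP kP; rewrite -em' in mR kR.
  apply: (prop_generic (hm := mn)) => //.
  - exact: eqmx_tr (eqmx_sy kP) (eqmx_tr (eqmx_sy eK) kR).
  - exact: eqmx_tr (eqmx_sy mP) (eqmx_tr (eqmx_sy eI) mR).
  - by move=> T; apply: sel_ab'.
  - by move=> T; apply: sel_ab'.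
split.
  move=> a b B B' ad; have [_ rI] := rank_facts _ _ _ _ _ _ ad.
  case/and4P: (ad) => abn Bu B'u _.
  have em : m = (a + b)%N by rewrite Hm rI.
  have mn : (m <= n)%N by rewrite em.
  rewrite rank_lam // (@Dm_delta F n m a b (io mn)) ?mxrank_delta // => T.
  exact: sel_ab'.
split; first exact: Rpart.
have rKI : \rank (KerIm P) = n by rewrite /KerIm block_rank addnC rank_ImKer.
split => //; apply: Rpart => //; [exact: block_Im | exact: block_Ker].
Qed.
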